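(* Let $\xi^{(N)},\eta^{(N)}$ ($N\in\mathbb{N}$) and $\xi^{(\infty)},\eta^{(\infty)}$ be $d$-tuples of bounded Hilbert space operators. If $\lim_{N\to\infty}\operatorname{d}_{\mathrm{mr}}(\xi^{(N)}\to\xi^{(\infty)})=0$ and $\lim_{N\to\infty}\operatorname{d}_{\mathrm{mr}}(\eta^{(\infty)}\to\eta^{(N)})=0$, then \[\limsup_{N,M\to\infty}\operatorname{d}_{\mathrm{mr}}(\xi^{(N)}\to\eta^{(M)})\leq\operatorname{d}_{\mathrm{mr}}(\xi^{(\infty)}\to\eta^{(\infty)}).\]
   Context: For $d$-tuples $X,Y$ of $n\times n$ matrices, $\|X-Y\|=\max_i\|X_i-Y_i\|$ (operator norm). The matrix range of $A\in B(\mathcal H)^d$ is $\mathcal{W}(A)=\sqcup_n\mathcal{W}_n(A)$ with $\mathcal{W}_n(A)=\{(\phi(A_1),\dots,\phi(A_d)):\phi:C^*(A)\to M_n\text{ unital completely positive}\}$. The one-sided matrix range distance is $\operatorname{d}_{\mathrm{mr}}(A\to B)=\sup_n\sup_{X\in\mathcal{W}_n(A)}\inf_{Y\in\mathcal{W}_n(B)}\|X-Y\|$. *)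

(* Defs.v *)
From HB Require Import structures.
From mathcomp Require Import all_boot all_order all_algebra.
From mathcomp Require Import all_classical all_reals.
From mathcomp Require Import ereal topology normedtype sequences.
From mathcomp Require Import complex.

Set Implicit Arguments.
Unset Strict Implicit.
Unset Printing Implicit Defensive.

Import Order.TTheory GRing.Theory Num.Theory.
Local Open Scope classical_set_scope.
Local Open Scope ring_scope.

Record hilbert (R : realType) := Hilbert {
  hsp :> lmodType (complex R);
  hip : hsp -> hsp -> complex R;
  hip_linl : forall (a : complex R) (x y z : hsp),
      hip (a *: x + y) z = a * hip x z + hip y z;
  hip_sym : forall x y : hsp, hip y x = conjc (hip x y);
  hip_ge0 : forall x : hsp, 0 <= hip x x;
  hip_eq0 : forall x : hsp, hip x x = 0 -> x = 0;
  hip_complete : forall u : nat -> hsp,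
      (forall e : R, 0 < e -> exists N : nat, forall m n : nat, (N <= m)%N -> (N <= n)%N ->
          Num.sqrt (complex.Re (hip (u m - u n) (u m - u n))) < e) ->
      exists x : hsp, forall e : R, 0 < e -> exists N : nat, forall n : nat, (N <= n)%N ->
          Num.sqrt (complex.Re (hip (u n - x) (u n - x))) < e
}.

Section Ops.
Variable R : realType.

Definition hnorm (H : hilbert R) (x : H) : R := Num.sqrt (complex.Re (hip x x)).

(* (possibly unbounded) maps on H; bounded operators are those below *)
Definition op (H : hilbert R) := H -> H.

Definition bounded_op (H : hilbert R) (T : op H) : Prop :=
  (forall (a : complex R) (x y : H), T (a *: x + y) = a *: T x + T y) /\
  exists c : R, forall x : H, hnorm (T x) <= c * hnorm x.

Definition opnormH (H : hilbert R) (T : op H) : \bar R :=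
  ereal_sup [set (hnorm (T x))%:E | x in [set x : H | hnorm x <= 1]].

Definition op_cvg (H : hilbert R) (Ts : nat -> op H) (T : op H) : Prop :=
  forall e : R, 0 < e -> exists N : nat, forall k : nat, (N <= k)%N ->
    (opnormH (fun x => (Ts k x - T x)%R) < e%:E)%E.

Definition is_adj (H : hilbert R) (T S : op H) : Prop :=
  forall x y : H, hip (T x) y = hip x (S y).

(* C*(A): the smallest norm-closed *-subalgebra of B(H) containing 1 and the A_i *)
Inductive cstar_gen (H : hilbert R) (d : nat) (A : 'I_d -> op H) : op H -> Prop :=
| cs_gen (i : 'I_d) : cstar_gen A (A i)
| cs_one : cstar_gen A (fun x => x)
| cs_add (T S : op H) : cstar_gen A T -> cstar_gen A S -> cstar_gen A (fun x => T x + S x)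
| cs_scale (a : complex R) (T : op H) : cstar_gen A T -> cstar_gen A (fun x => a *: T x)
| cs_mul (T S : op H) : cstar_gen A T -> cstar_gen A S -> cstar_gen A (fun x => T (S x))
| cs_adj (T S : op H) : cstar_gen A T -> is_adj T S -> cstar_gen A S
| cs_lim (Ts : nat -> op H) (T : op H) :
    (forall k, cstar_gen A (Ts k)) -> op_cvg Ts T -> cstar_gen A T.

(* positivity of a k x k operator matrix, as an operator on H^k *)
Definition opmx_pos (H : hilbert R) (k : nat) (T : 'I_k -> 'I_k -> op H) : Prop :=
  forall x : 'I_k -> H, 0 <= \sum_(i < k) \sum_(j < k) hip (T i j (x j)) (x i).

Definition blockmx_pos (n k : nat) (B : 'I_k -> 'I_k -> 'M[complex R]_n) : Prop :=
  forall v : 'I_k -> 'cV[complex R]_n,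
    0 <= \sum_(i < k) \sum_(j < k) \sum_(r < n) conjc (v i r ord0) * (B i j *m v j) r ord0.

(* unital completely positive maps C*(A) -> M_n (only values on C*(A) matter) *)
Definition ucp (H : hilbert R) (d n : nat) (A : 'I_d -> op H)
    (phi : op H -> 'M[complex R]_n) : Prop :=
  [/\ (forall (a : complex R) (T S : op H), cstar_gen A T -> cstar_gen A S ->
          phi (fun x => a *: T x + S x) = a *: phi T + phi S),
      phi (fun x => x) = 1%:M &
      forall (k : nat) (T : 'I_k -> 'I_k -> op H),
        (forall i j, cstar_gen A (T i j)) -> opmx_pos T ->
        blockmx_pos (fun i j => phi (T i j))].

Definition mrange (H : hilbert R) (d n : nat) (A : 'I_d -> op H) : set ('I_d -> 'M[complex R]_n) :=
  [set X | exists phi : op H -> 'M[complex R]_n, ucp A phi /\ forall i, X i = phi (A i)].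

Definition vnorm (n : nat) (v : 'cV[complex R]_n) : R :=
  Num.sqrt (\sum_(r < n) complex.Re (v r ord0 * conjc (v r ord0))).

Definition mxnorm (n : nat) (M : 'M[complex R]_n) : \bar R :=
  ereal_sup [set (vnorm (M *m v))%:E | v in [set v : 'cV[complex R]_n | vnorm v <= 1]].

Definition tnorm (d n : nat) (X : 'I_d -> 'M[complex R]_n) : \bar R :=
  \big[Order.max/0%E]_(i < d) mxnorm (X i).

(* d_mr(A -> B), with n ranging over n >= 1 (matrices 'M_n.+1) *)
Definition dmr (H1 H2 : hilbert R) (d : nat) (A : 'I_d -> op H1) (B : 'I_d -> op H2) : \bar R :=
  ereal_sup [set e | exists (n : nat) (X : 'I_d -> 'M[complex R]_n.+1),
     @mrange _ _ n.+1 A X /\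
     e = ereal_inf [set tnorm (fun i => X i - Y i) | Y in @mrange _ _ n.+1 B]].

Definition limsup2 (a : nat -> nat -> \bar R) : \bar R :=
  ereal_inf [set ereal_sup [set e | exists N M : nat, (K <= N)%N /\ (K <= M)%N /\ e = a N M]
            | K in [set: nat]].

End Ops.

(* Main.v *)
Set Warnings "-all".
Require Import Defs.
From HB Require Import structures.
From mathcomp Require Import all_boot all_order all_algebra.
From mathcomp Require Import all_classical all_reals.
From mathcomp Require Import ereal topology normedtype sequences.
From mathcomp Require Import complex.
From mathcomp Require Import ring lra.
Import Order.TTheory GRing.Theory Num.Theory.
Import numFieldNormedType.Exports.
Local Open Scope classical_set_scope.
Local Open Scope ring_scope.

Lemma cs_real (R : realType) (n : nat) (x y : 'I_n -> R) :
  (\sum_i x i * y i) ^+ 2 <= (\sum_i x i ^+ 2) * (\sum_i y i ^+ 2).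
Proof.
have E : (\sum_i x i ^+ 2) * (\sum_i y i ^+ 2) - (\sum_i x i * y i) ^+ 2
   = (\sum_i \sum_j (x i * y j - x j * y i) ^+ 2) / 2.
  have E1 : (\sum_i x i ^+ 2) * (\sum_i y i ^+ 2) = \sum_i \sum_j (x i ^+ 2 * y j ^+ 2).
    by rewrite big_distrl /=; apply: eq_bigr => i _; rewrite big_distrr.
  have E2 : (\sum_i x i * y i) ^+ 2 = \sum_i \sum_j ((x i * y i) * (x j * y j)).
    by rewrite expr2 big_distrl /=; apply: eq_bigr => i _; rewrite big_distrr.
  have E3 : \sum_i \sum_j (x j ^+ 2 * y i ^+ 2) = \sum_i \sum_j (x i ^+ 2 * y j ^+ 2).
    by rewrite exchange_big /=.
  have E4 : \sum_i \sum_j (x i * y j - x j * y i) ^+ 2 =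
     \sum_i \sum_j (x i ^+ 2 * y j ^+ 2) + \sum_i \sum_j (x j ^+ 2 * y i ^+ 2)
     - 2 * \sum_i \sum_j ((x i * y i) * (x j * y j)).
    rewrite -big_split /= mulr_sumr -sumrB; apply: eq_bigr => i _.
    rewrite -big_split /= mulr_sumr -sumrB; apply: eq_bigr => j _.
    ring.
  rewrite E4 E3 E1 E2; field; lra.
suff : 0 <= (\sum_i x i ^+ 2) * (\sum_i y i ^+ 2) - (\sum_i x i * y i) ^+ 2 by rewrite subr_ge0.
rewrite E divr_ge0 //; apply: sumr_ge0 => i _; apply: sumr_ge0 => j _.
exact: sqr_ge0.
Qed.

Lemma minkowski_real (R : realType) (n : nat) (x y : 'I_n -> R) :
  Num.sqrt (\sum_i (x i + y i) ^+ 2) <=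
  Num.sqrt (\sum_i x i ^+ 2) + Num.sqrt (\sum_i y i ^+ 2).
Proof.
set A := \sum_i x i ^+ 2; set B := \sum_i y i ^+ 2.
have A0 : 0 <= A by apply: sumr_ge0 => i _; exact: sqr_ge0.
have B0 : 0 <= B by apply: sumr_ge0 => i _; exact: sqr_ge0.
have C : \sum_i x i * y i <= Num.sqrt A * Num.sqrt B.
  rewrite -sqrtrM //.
  apply: (le_trans (ler_norm _)).
  by rewrite -sqrtr_sqr ler_sqrt ?cs_real // mulr_ge0.
have S : \sum_i (x i + y i) ^+ 2 = A + B + 2 * \sum_i x i * y i.
  rewrite /A /B -big_split mulr_sumr -big_split /=; apply: eq_bigr => i _; ring.
have S0 : 0 <= \sum_i (x i + y i) ^+ 2 by apply: sumr_ge0 => i _; exact: sqr_ge0.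
rewrite -(@ler_pXn2r _ 2) // ?nnegrE ?sqrtr_ge0 ?addr_ge0 ?sqrtr_ge0 //.
rewrite sqr_sqrtr // sqrrD !sqr_sqrtr // S; lra.
Qed.

Definition nc {R : realType} (z : complex R) : R := Normc.normc z.

Lemma ReJ (R : realType) (z : complex R) : complex.Re (z * conjc z) = nc z ^+ 2.
Proof.
case: z => a b; rewrite /nc /= sqr_sqrtr ?addr_ge0 ?sqr_ge0 //; ring.
Qed.

Lemma nc_ge0 (R : realType) (z : complex R) : 0 <= nc z.
Proof. by case: z => a b; rewrite /nc /= sqrtr_ge0. Qed.

Lemma vnormE (R : realType) n (v : 'cV[complex R]_n) :
  vnorm v = Num.sqrt (\sum_r nc (v r ord0) ^+ 2).
Proof. by rewrite /vnorm; congr Num.sqrt; apply: eq_bigr => r _; rewrite ReJ. Qed.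

Lemma vnorm_ge0 (R : realType) n (v : 'cV[complex R]_n) : 0 <= vnorm v.
Proof. by rewrite vnormE sqrtr_ge0. Qed.

Lemma vnormD (R : realType) n (v w : 'cV[complex R]_n) :
  vnorm (v + w) <= vnorm v + vnorm w.
Proof.
rewrite !vnormE; apply: le_trans (@minkowski_real _ _ (fun r => nc (v r ord0)) (fun r => nc (w r ord0))).
rewrite ler_sqrt; last by apply: sumr_ge0 => i _; exact: sqr_ge0.
apply: ler_sum => r _; rewrite mxE.
rewrite ler_pXn2r // ?nnegrE ?nc_ge0 ?addr_ge0 ?nc_ge0 //.
exact: le_normcD.
Qed.

Lemma ev_lt (R : realType) (u : nat -> \bar R) (e : R) :
  u n @[n --> \oo] --> 0%E -> 0 < e ->
  exists K, forall n, (K <= n)%N -> (u n < e%:E)%E.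
Proof.
move=> /fine_cvgP [hf hc] e0.
have h2 := cvgr_dist_lt _ _ hc _ e0.
have {}h2 := h2 eventually_filter.
have h : \forall n \near \oo, (u n < e%:E)%E.
  apply: (filterS2 _ _ hf h2) => n fn.
  rewrite /= sub0r normrN => lt.
  rewrite -(fineK fn) lte_fin; exact: le_lt_trans (ler_norm _) lt.
case: h => K _ HK; exists K => n Kn; exact: HK.
Qed.

Lemma vnorm0 (R : realType) n : vnorm (0 : 'cV[complex R]_n) = 0.
Proof. by rewrite /vnorm big1 ?sqrtr0 // => r _; rewrite mxE mul0r. Qed.

Lemma mxnorm_ge0 (R : realType) n (M : 'M[complex R]_n) : (0 <= mxnorm M)%E.
Proof.
apply: ereal_sup_ubound; exists 0; first by rewrite /= vnorm0.
by rewrite mulmx0 vnorm0.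
Qed.

Lemma mxnormD (R : realType) n (M N : 'M[complex R]_n) :
  (mxnorm (M + N) <= mxnorm M + mxnorm N)%E.
Proof.
apply: ge_ereal_sup => _ [v hv <-].
rewrite mulmxDl; apply: le_trans (_ : (vnorm (M *m v) + vnorm (N *m v))%:E <= _)%E.
  by rewrite lee_fin vnormD.
rewrite EFinD; apply: leeD; apply: ereal_sup_ubound; by exists v.
Qed.

Lemma tnorm_ge0 (R : realType) d n (X : 'I_d -> 'M[complex R]_n) : (0 <= tnorm X)%E.
Proof. exact: bigmax_ge_id. Qed.

Lemma tnormD (R : realType) d n (X Y : 'I_d -> 'M[complex R]_n) :
  (tnorm (fun i => (X i + Y i)%R) <= tnorm X + tnorm Y)%E.
Proof.
apply: bigmax_le; first by rewrite adde_ge0 ?tnorm_ge0.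
move=> i _; apply: le_trans; first exact: mxnormD.
by apply: leeD; apply: le_bigmax.
Qed.

Lemma step (R : realType) (H1 H2 : hilbert R) d n (A : 'I_d -> op H1) (B : 'I_d -> op H2)
  (X : 'I_d -> 'M[complex R]_n.+1) (c : \bar R) :
  @mrange _ _ _ n.+1 A X -> (dmr A B < c)%E ->
  exists2 Y, @mrange _ _ _ n.+1 B Y & (tnorm (fun i => (X i - Y i)%R) < c)%E.
Proof.
move=> hX hc.
have : (ereal_inf [set tnorm (fun i => (X i - Y i)%R) | Y in @mrange _ _ _ n.+1 B] < c)%E.
  apply: le_lt_trans hc; apply: ereal_sup_ubound; by exists n, X.
by move=> /ereal_inf_lt [_ [Y hY <-] h]; exists Y.
Qed.

Arguments ev_lt {R u e}.
Arguments step {R H1 H2 d n A B X c}.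

Theorem proposition2p6 (R : realType) (d : nat)
  (Hxi : nat -> hilbert R) (xi : forall N : nat, 'I_d -> op (Hxi N))
  (Hxiinf : hilbert R) (xiinf : 'I_d -> op Hxiinf)
  (Heta : nat -> hilbert R) (eta : forall N : nat, 'I_d -> op (Heta N))
  (Hetainf : hilbert R) (etainf : 'I_d -> op Hetainf)
  (bxi : forall (N : nat) (i : 'I_d), bounded_op (xi N i))
  (bxiinf : forall i : 'I_d, bounded_op (xiinf i))
  (beta : forall (N : nat) (i : 'I_d), bounded_op (eta N i))
  (betainf : forall i : 'I_d, bounded_op (etainf i))
  (hxi : dmr (xi N) xiinf @[N --> \oo] --> 0%E)
  (heta : dmr etainf (eta N) @[N --> \oo] --> 0%E) :
  (limsup2 (fun N M => dmr (xi N) (eta M)) <= dmr xiinf etainf)%E.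
Proof.
apply/lee_addgt0Pr => e e0.
have e3 : 0 < e / 3 by rewrite divr_gt0.
have [K1 hK1] := ev_lt hxi e3.
have [K2 hK2] := ev_lt heta e3.
set D := dmr xiinf etainf.
apply: ge_ereal_inf; eexists; first by exists (maxn K1 K2).
apply: ge_ereal_sup => _ [N [M [hN [hM ->]]]].
apply: ge_ereal_sup => _ [n [X [hX ->]]].
have [Y hY hXY] := step hX (hK1 N (leq_trans (leq_maxl _ _) hN)).
have hinf : (ereal_inf [set tnorm (fun i => (Y i - Z i)%R) | Z in @mrange _ _ _ n.+1 etainf] <= D)%E.
  by apply: ereal_sup_ubound; exists n, Y.
case eD : D hinf => [r| |] hinf.
- have [Z hZ hYZ] : exists2 Z, @mrange _ _ _ n.+1 etainf Z &
      (tnorm (fun i => (Y i - Z i)%R) < (r + e / 3)%:E)%E.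
    have : (ereal_inf [set tnorm (fun i => (Y i - Z i)%R) | Z in @mrange _ _ _ n.+1 etainf]
             < (r + e / 3)%:E)%E.
      by apply: le_lt_trans hinf _; rewrite lte_fin ltrDl.
    by move=> /ereal_inf_lt [_ [Z hZ <-] h]; exists Z.
  have [W hW hZW] := step hZ (hK2 M (leq_trans (leq_maxr _ _) hM)).
  apply: ge_ereal_inf; eexists; first by exists W.
  have -> : (fun i => (X i - W i)%R) =
            (fun i => ((X i - Y i) + ((Y i - Z i) + (Z i - W i)))%R).
    by apply: funext => i; rewrite [(Y i - Z i + _)%R]addrA subrK addrA subrK.
  apply: (le_trans (tnormD _ _ _ (fun i => (X i - Y i)%R) (fun i => ((Y i - Z i) + (Z i - W i))%R))).
  apply: (le_trans (leeD (lexx _) (tnormD _ _ _ (fun i => (Y i - Z i)%R) (fun i => (Z i - W i)%R)))).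
  apply: (le_trans (leeD (ltW hXY) (leeD (ltW hYZ) (ltW hZW)))).
  rewrite -!EFinD lee_fin.
  have -> : e / 3 + (r + e / 3 + e / 3) = r + e by field.
  exact: lexx.
- have -> : (+oo + e%:E = +oo :> \bar R)%E by [].
  exact: leey.
- exfalso.
  have h0 : (0 <= ereal_inf [set tnorm (fun i => (Y i - Z i)%R) | Z in @mrange _ _ _ n.+1 etainf])%E.
    by apply/ereal_infP => _ [Z _ <-]; exact: tnorm_ge0.
  by have := le_trans h0 hinf; rewrite leeNy_eq.
Qed.
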